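(* Let $A_1,\dots,A_m\in\mathbb{C}^{n\times n}$ be Hermitian matrices and fix $t\ge1$. (a) The map sending an ordered $*$-simultaneous block decomposition $(V_1,\dots,V_t)$ of $A_1,\dots,A_m$ to $(\epsilon_1,\dots,\epsilon_t)$, with $\epsilon_j$ the projection of $\mathbb{C}^n$ onto $V_j$ along $\bigoplus_{l\ne j}V_l$, is a bijection onto the set of ordered complete sets of $t$ orthogonal idempotents of $Z(A_1,\dots,A_m)$. In particular, there exist $P\in\mathrm{GL}_n(\mathbb{C})$ and positive integers $n_1,\dots,n_t$ summing to $n$ such that each $P^*A_iP$ is block diagonal with blocks of sizes $n_1,\dots,n_t$ if and only if $Z(A_1,\dots,A_m)$ contains a complete set of $t$ orthogonal idempotents. (b) Restricting (a) to decompositions whose subspaces $V_j$ are pairwise orthogonal for the standard Hermitian inner product, the same map (now $\epsilon_j$ is the orthogonal projection onto $V_j$) is a bijection onto the ordered complete sets of $t$ orthogonal idempotents of $Z(A_1,\dots,A_m)$ consisting of Hermitian matrices; in particular a unitary $U$ with every $U^*A_iU$ block diagonal with $t$ blocks exists if and only if $Z(A_1,\dots,A_m)$ contains a complete set of $t$ orthogonal idempotents that are Hermitian matrices.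
   Context: For Hermitian $A_1,\dots,A_m\in\mathbb{C}^{n\times n}$, the center is $Z(A_1,\dots,A_m)=\{X\in\mathbb{C}^{n\times n} : (A_iX)^*=A_iX \text{ for all } i\}$, where $^*$ denotes conjugate transpose. An ordered $*$-simultaneous block decomposition of length $t$ is a $t$-tuple $(V_1,\dots,V_t)$ of nonzero subspaces of $\mathbb{C}^n$ with $\mathbb{C}^n=V_1\oplus\cdots\oplus V_t$ and $x^*A_iy=0$ for all $i$, all $j\neq l$, $x\in V_j$, $y\in V_l$. An ordered complete set of $t$ orthogonal idempotents of the center is a $t$-tuple of nonzero matrices $\epsilon_1,\dots,\epsilon_t\in Z(A_1,\dots,A_m)$ with $\epsilon_j^2=\epsilon_j$, $\epsilon_j\epsilon_l=0$ for $j\neq l$, and $\sum_j\epsilon_j=I_n$. *)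

(* Defs.v *)
From mathcomp Require Import all_boot all_algebra complex.
From mathcomp Require Import reals.
Set Implicit Arguments. Unset Strict Implicit. Unset Printing Implicit Defensive.
Import GRing.Theory Num.Theory.
Local Open Scope ring_scope.

Section Defs.
Variable R : realType.
Local Notation C := (R[i]).

Definition adjmx (p q : nat) (M : 'M[C]_(p, q)) : 'M[C]_(q, p) :=
  (map_mx Num.conj M)^T.

Definition herm_mx (n : nat) (M : 'M[C]_n) : Prop := adjmx M = M.

Definition unitary_mx (n : nat) (U : 'M[C]_n) : Prop := adjmx U *m U = 1%:M.

Definition in_center (m n : nat) (A : 'I_m -> 'M[C]_n) (X : 'M[C]_n) : Prop :=
  forall i, adjmx (A i *m X) = A i *m X.

Definition block_decomp (m n t : nat) (A : 'I_m -> 'M[C]_n)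
    (V : 'I_t -> {vspace 'cV[C]_n}) : Prop :=
  [/\ (forall j, V j != 0%VS),
      directv (\sum_(j < t) V j),
      (\sum_(j < t) V j)%VS = fullv &
      forall i j l (x y : 'cV[C]_n), j != l -> x \in V j -> y \in V l ->
        adjmx x *m A i *m y = 0].

Definition orth_family (n t : nat) (V : 'I_t -> {vspace 'cV[C]_n}) : Prop :=
  forall j l (x y : 'cV[C]_n), j != l -> x \in V j -> y \in V l ->
    adjmx x *m y = 0.

(* eps_j is the projection of C^n onto V_j along (+)_{l <> j} V_l, i.e. the
   linear map which is the identity on V_j and zero on every V_l, l <> j *)
Definition proj_family (n t : nat) (V : 'I_t -> {vspace 'cV[C]_n})
    (eps : 'I_t -> 'M[C]_n) : Prop :=
  forall j l (v : 'cV[C]_n), v \in V l -> eps j *m v = (if j == l then v else 0).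

Definition orth_idem_set (m n t : nat) (A : 'I_m -> 'M[C]_n)
    (eps : 'I_t -> 'M[C]_n) : Prop :=
  [/\ (forall j, eps j != 0),
      (forall j, in_center A (eps j)),
      (forall j, eps j *m eps j = eps j),
      (forall j l, j != l -> eps j *m eps l = 0) &
      \sum_(j < t) eps j = 1%:M].

Definition in_block (t : nat) (ns : 'I_t -> nat) (j : 'I_t) (r : nat) : bool :=
  ((\sum_(l < t | (l < j)%N) ns l <= r) && (r < \sum_(l < t | (l <= j)%N) ns l))%N.

Definition block_diag (n t : nat) (ns : 'I_t -> nat) (M : 'M[C]_n) : Prop :=
  forall r c : 'I_n, ~~ [exists j, in_block ns j r && in_block ns j c] -> M r c = 0.

End Defs.

(* Main.v *)
Require Import Defs.
From mathcomp Require Import all_boot all_algebra complex.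
From mathcomp Require Import reals.
From Stdlib Require Import FunctionalExtensionality.
Import GRing.Theory Num.Theory.
Local Open Scope ring_scope.

Module Lib.
Set Implicit Arguments. Unset Strict Implicit. Unset Printing Implicit Defensive.

Section S.
Variable R : realType.
Local Notation C := R[i].

Lemma adjmxE n p (M : 'M[C]_(n,p)) : adjmx M = (M ^t* )%sesqui.
Proof. by rewrite /adjmx map_trmx. Qed.

Lemma adjmxK n p (M : 'M[C]_(n,p)) : adjmx (adjmx M) = M.
Proof. by rewrite !adjmxE trmxCK. Qed.

Lemma adjmxM n p q (M : 'M[C]_(n,p)) (N : 'M[C]_(p,q)) :
  adjmx (M *m N) = adjmx N *m adjmx M.
Proof. by rewrite /adjmx map_mxM trmx_mul. Qed.

Lemma adjmxD n p (M N : 'M[C]_(n,p)) : adjmx (M + N) = adjmx M + adjmx N.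
Proof. by rewrite /adjmx map_mxD linearD. Qed.

Lemma adjmx0 n p : adjmx (0 : 'M[C]_(n,p)) = 0.
Proof. by rewrite /adjmx map_mx0 trmx0. Qed.

Lemma adjmx1 n : adjmx (1%:M : 'M[C]_n) = 1%:M.
Proof. by rewrite /adjmx map_mx1 trmx1. Qed.

Lemma adjmx_sum n p I (r : seq I) (P : pred I) (F : I -> 'M[C]_(n,p)) :
  adjmx (\sum_(i <- r | P i) F i) = \sum_(i <- r | P i) adjmx (F i).
Proof. exact: (big_morph _ (@adjmxD n p) (@adjmx0 n p)). Qed.

Lemma mx_ext n p (E E' : 'M[C]_(n,p)) :
  (forall v : 'cV[C]_p, E *m v = E' *m v) -> E = E'.
Proof.
move=> H; apply/matrixP => r c.
have := congr1 (fun M : 'cV[C]_n => M r 0) (H (delta_mx c 0)).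
rewrite !mxE (bigD1 c) //= big1; last by move=> k /negPf kc; rewrite mxE kc mulr0.
rewrite (bigD1 c) //= big1; last by move=> k /negPf kc; rewrite mxE kc mulr0.
by rewrite !mxE !eqxx !mulr1 !addr0.
Qed.

Lemma mx_ext2 n (E E' : 'M[C]_n) :
  (forall x y : 'cV[C]_n, adjmx x *m E *m y = adjmx x *m E' *m y) -> E = E'.
Proof.
move=> H; apply: mx_ext => y; apply/matrixP => r c; rewrite [c]ord1.
have := congr1 (fun M : 'M[C]_1 => M 0 0) (H (delta_mx r 0) y).
rewrite -!mulmxA !mxE (bigD1 r) //= big1; last first.
  by move=> k /negPf kc; rewrite !mxE kc conjC0 mul0r.
rewrite (bigD1 r) //= big1; last by move=> k /negPf kc; rewrite !mxE kc conjC0 mul0r.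
by rewrite !mxE !eqxx conjC1 !mul1r !addr0.
Qed.

Variables (n t : nat).
Implicit Types (V : 'I_t -> {vspace 'cV[C]_n}) (eps : 'I_t -> 'M[C]_n).

Lemma decompV V (v : 'cV[C]_n) : (\sum_(j < t) V j)%VS = fullv ->
  exists2 vs : 'I_t -> 'cV[C]_n, (forall j, vs j \in V j) & v = \sum_j vs j.
Proof.
move=> hs; have : v \in (\sum_(j < t) V j)%VS by rewrite hs memvf.
by case/memv_sumP => vs h ->; exists vs => // j; apply: h.
Qed.

Lemma eq_onV V (E E' : 'M[C]_n) : (\sum_(j < t) V j)%VS = fullv ->
  (forall l v, v \in V l -> E *m v = E' *m v) -> E = E'.
Proof.
move=> hs h; apply: mx_ext => v; have [vs hv ->] := decompV v hs.
by rewrite !mulmx_sumr; apply: eq_bigr => j _; apply: h.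
Qed.

Lemma proj_mul V eps j (v : 'cV[C]_n) : (\sum_(j < t) V j)%VS = fullv ->
  proj_family V eps -> v \in V j -> eps j *m v = v.
Proof. by move=> _ hp hv; rewrite (hp j j v hv) eqxx. Qed.

Lemma proj_unique V eps eps' : (\sum_(j < t) V j)%VS = fullv ->
  proj_family V eps -> proj_family V eps' -> eps = eps'.
Proof.
move=> hs hp hp'; apply: functional_extensionality => j.
by apply: (eq_onV hs) => l v hv; rewrite (hp j l v hv) (hp' j l v hv).
Qed.

Definition mxof_end (f : 'End('cV[C]_n)) : 'M[C]_n :=
  \matrix_(r, c) f (delta_mx c 0) r 0.

Lemma mxof_endE f (v : 'cV[C]_n) : mxof_end f *m v = f v.
Proof.
have -> : v = \sum_(c < n) v c 0 *: delta_mx c 0.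
  apply/matrixP => r k; rewrite [k]ord1 summxE (bigD1 r) //= big1.
    by rewrite !mxE !eqxx mulr1 addr0.
  by move=> c /negPf rc; rewrite !mxE eq_sym rc mulr0.
rewrite mulmx_sumr linear_sum /=; apply: eq_bigr => c _.
rewrite [RHS]linearZ /=.
rewrite -scalemxAr; congr (_ *: _).
apply/matrixP => r k; rewrite [k]ord1 !mxE (bigD1 c) //= big1.
  by rewrite !mxE !eqxx mulr1 addr0.
by move=> d /negPf dc; rewrite !mxE dc mulr0.
Qed.

Lemma proj_exists (V : 'I_t -> {vspace 'cV[C]_n}) :
  directv (\sum_(j < t) V j) -> (\sum_(j < t) V j)%VS = fullv ->
  exists eps, proj_family V eps.
Proof.
move=> hd hs.
pose pi j := sumv_pi (\sum_(j < t) V j)%VS j.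
have hpi : forall j v, pi j v \in V j by move=> j v; apply: memv_sum_pi.
have hsum : forall v, \sum_j pi j v = v.
  by move=> v; apply: sumv_pi_sum; rewrite hs memvf.
exists (fun j => mxof_end (pi j)) => j l v hv; rewrite mxof_endE.
move/directv_sum_unique: hd => hu.
have := hu (fun k => pi k v) (fun k => if k == l then v else 0) (fun k _ => hpi k v).
have -> : \sum_k (if k == l then v else 0) = v.
  by rewrite (bigD1 l) //= eqxx big1 ?addr0 // => k /negPf ->.
rewrite hsum eqxx.
have hv' : forall k, true -> (if k == l then v else 0) \in V k.
  by move=> k _; case: eqP => [->|_]; rewrite ?mem0v.
move=> /(_ hv') /esym /forall_inP /(_ j isT) /eqP ->.
by rewrite eq_sym.
Qed.

Lemma bil_sum (B : 'M[C]_n) (X Y : 'I_t -> 'cV[C]_n) :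
  adjmx (\sum_a X a) *m B *m (\sum_b Y b) =
  \sum_a \sum_b adjmx (X a) *m B *m Y b.
Proof.
rewrite adjmx_sum !mulmx_suml; apply: eq_bigr => a _.
by rewrite mulmx_sumr.
Qed.

Lemma proj_idem (V : 'I_t -> {vspace 'cV[C]_n}) eps :
  (\sum_(j < t) V j)%VS = fullv -> (forall j, V j != 0%VS) -> proj_family V eps ->
  [/\ (forall j, eps j != 0),
      (forall j, eps j *m eps j = eps j),
      (forall j l, j != l -> eps j *m eps l = 0) &
      \sum_(j < t) eps j = 1%:M].
Proof.
move=> hs hnz hp; split.
- move=> j; apply/eqP => e0.
  have hv := memv_pick (V j).
  have := hp j j _ hv; rewrite eqxx e0 mul0mx => /esym/eqP.
  by rewrite vpick0 (negPf (hnz j)).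
- move=> j; apply: (eq_onV hs) => l v hv; rewrite -mulmxA (hp j l v hv).
  by case: eqP => [->|_]; rewrite ?(hp l l v hv) ?eqxx ?mulmx0.
- move=> j l jl; apply: (eq_onV hs) => k v hv; rewrite -mulmxA (hp l k v hv) mul0mx.
  case: eqP => [lk|_]; last by rewrite mulmx0.
  by rewrite (hp j k v hv); subst k; rewrite (negPf jl).
- apply: (eq_onV hs) => l v hv; rewrite mulmx_suml mul1mx.
  rewrite (eq_bigr (fun j => if j == l then v else 0)); last by move=> j _; apply: hp.
  by rewrite (bigD1 l) //= eqxx big1 ?addr0 // => k /negPf ->.
Qed.

Lemma adj_comm (V : 'I_t -> {vspace 'cV[C]_n}) eps (B : 'M[C]_n) :
  (\sum_(j < t) V j)%VS = fullv -> proj_family V eps ->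
  (forall a b (x y : 'cV[C]_n), a != b -> x \in V a -> y \in V b ->
     adjmx x *m B *m y = 0) ->
  forall j, adjmx (eps j) *m B = B *m eps j.
Proof.
move=> hs hp hB j; apply: mx_ext2 => x y.
rewrite !mulmxA -adjmxM -!mulmxA [B *m (_ *m y)]mulmxA.
have [xs hx ->] := decompV x hs; have [ys hy ->] := decompV y hs.
suff: adjmx (\sum_a (eps j *m xs a)) *m B *m (\sum_b ys b) =
      adjmx (\sum_a xs a) *m B *m (\sum_b (eps j *m ys b)).
  by rewrite -!mulmx_sumr !mulmxA.
rewrite !bil_sum; apply: eq_bigr => a _; apply: eq_bigr => b _.
rewrite (hp j a _ (hx a)) (hp j b _ (hy b)).
have [ab|ab] := eqVneq a b.
  by subst b; case: (j == a); rewrite ?adjmx0 ?mul0mx ?mulmx0.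
by case: (j == a); case: (j == b); rewrite ?adjmx0 ?mul0mx ?mulmx0 ?(hB a b _ _ ab (hx a) (hy b)).
Qed.


Lemma part_a2 m (A : 'I_m -> 'M[C]_n) (hA : forall k, herm_mx (A k))
  (V : 'I_t -> {vspace 'cV[C]_n}) eps :
  block_decomp A V -> proj_family V eps -> orth_idem_set A eps.
Proof.
case=> hnz hd hs horth hp; have [h1 h2 h3 h4] := proj_idem hs hnz hp.
split => // j i; rewrite adjmxM (hA i).
apply: (adj_comm hs hp) => a b x y ab hx hy; exact: (horth i a b x y ab hx hy).
Qed.

Lemma herm_proj (V : 'I_t -> {vspace 'cV[C]_n}) eps :
  (\sum_(j < t) V j)%VS = fullv -> orth_family V -> proj_family V eps ->
  forall j, herm_mx (eps j).
Proof.
move=> hs ho hp j; rewrite /herm_mx.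
rewrite -[adjmx _]mulmx1 (adj_comm (B := 1%:M) hs hp) ?mul1mx //.
by move=> a b x y ab hx hy; rewrite mulmx1; apply: ho hx hy.
Qed.

Lemma V_sub (V V' : 'I_t -> {vspace 'cV[C]_n}) eps :
  (\sum_(j < t) V' j)%VS = fullv -> proj_family V eps -> proj_family V' eps ->
  forall j, (V j <= V' j)%VS.
Proof.
move=> hs hp hp' j; apply/subvP => v hv.
have [vs hvs Dv] := decompV v hs.
have e1 := hp j j v hv; rewrite eqxx in e1.
have : eps j *m v = vs j.
  rewrite Dv mulmx_sumr (bigD1 j) //= (hp' j j _ (hvs j)) eqxx big1 ?addr0 //.
  by move=> k /negPf kj; rewrite (hp' j k _ (hvs k)) eq_sym kj.
by rewrite e1 => ->.
Qed.

Lemma V_unique (V V' : 'I_t -> {vspace 'cV[C]_n}) eps :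
  (\sum_(j < t) V j)%VS = fullv -> (\sum_(j < t) V' j)%VS = fullv ->
  proj_family V eps -> proj_family V' eps -> V = V'.
Proof.
move=> hs hs' hp hp'; apply: functional_extensionality => j; apply/eqP.
by rewrite eqEsubv (V_sub hs' hp hp') (V_sub hs hp' hp).
Qed.

Definition Vof eps (j : 'I_t) : {vspace 'cV[C]_n} :=
  (linfun (mulmx (eps j)) @: fullv)%VS.

Lemma memVof eps j (v : 'cV[C]_n) : reflect (exists u, v = eps j *m u) (v \in Vof eps j).
Proof.
apply: (iffP idP).
  by case/memv_imgP => u _ ->; exists u; rewrite lfunE.
by case=> u ->; apply/memv_imgP; exists u; rewrite ?memvf ?lfunE.
Qed.

Lemma Vof_decomp m (A : 'I_m -> 'M[C]_n) (hA : forall k, herm_mx (A k)) eps :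
  orth_idem_set A eps -> block_decomp A (Vof eps) /\ proj_family (Vof eps) eps.
Proof.
case=> hnz hc hid hor hsum.
have hp : proj_family (Vof eps) eps.
  move=> j l v /memVof [u ->]; rewrite mulmxA.
  by case: eqP => [->|jl]; rewrite ?hid // hor ?mul0mx //; apply/eqP.
have hadj : forall i j, adjmx (eps j) *m A i = A i *m eps j.
  by move=> i j; have := hc j i; rewrite adjmxM (hA i).
split => //; split.
- move=> j; apply/negP => /eqP V0; case/negP: (hnz j); apply/eqP.
  apply: mx_ext => v; rewrite mul0mx; apply/eqP; rewrite -memv0 -V0.
  by apply/memVof; exists v.
- apply/directv_sum_independent => us hus s0 j _.
  have := congr1 (mulmx (eps j)) s0; rewrite mulmx0 mulmx_sumr.
  rewrite (bigD1 j) //= (hp j j _ (hus j isT)) eqxx big1 ?addr0 //.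
  by move=> k /negPf kj; rewrite (hp j k _ (hus k isT)) eq_sym kj.
- apply/eqP; rewrite eqEsubv subvf /=; apply/subvP => v _.
  apply/memv_sumP; exists (fun j => eps j *m v).
    by move=> j _; apply/memVof; exists v.
  by rewrite -mulmx_suml hsum mul1mx.
- move=> i j l x y jl /memVof [u ->] /memVof [w ->].
  rewrite adjmxM -(mulmxA (adjmx u)) hadj -!mulmxA [eps j *m (eps l *m w)]mulmxA.
  by rewrite hor // mul0mx !mulmx0.
Qed.
End S.

End Lib.
Import Lib.

Module BlkM.
Local Close Scope ring_scope.
Set Implicit Arguments. Unset Strict Implicit. Unset Printing Implicit Defensive.

Section Blk.
Variables (n t : nat) (ht : (0 < t)%N) (ns : 'I_t -> nat).
Hypothesis hsum : (\sum_(j < t) ns j)%N = n.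

Definition lo (j : 'I_t) := (\sum_(l < t | (l < j)%N) ns l)%N.
Definition hi (j : 'I_t) := (\sum_(l < t | (l <= j)%N) ns l)%N.

Lemma in_blockE j r : in_block ns j r = (lo j <= r < hi j)%N.
Proof. by []. Qed.

Lemma hi_lo j : hi j = (lo j + ns j)%N.
Proof.
rewrite /hi (bigD1 j) //= addnC; congr (_ + _)%N.
by apply: eq_bigl => l; rewrite ltn_neqAle andbC.
Qed.

Lemma hi_le j : (hi j <= n)%N.
Proof.
rewrite -hsum /hi [X in (_ <= X)%N](bigID (fun l : 'I_t => (l <= j)%N)) /=.
exact: leq_addr.
Qed.

Lemma hi_lo_lt (j j' : 'I_t) : (j < j')%N -> (hi j <= lo j')%N.
Proof.
move=> jj; rewrite /hi /lo big_mkcond [X in (_ <= X)%N]big_mkcond /=.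
apply: leq_sum => l _; case: ifP => // lj.
by rewrite (leq_ltn_trans lj jj).
Qed.

Lemma block_uniq j j' r : in_block ns j r -> in_block ns j' r -> j = j'.
Proof.
rewrite !in_blockE => /andP[h1 h2] /andP[h3 h4].
case: (ltngtP j j') => [jj|jj|/val_inj //].
  by have := hi_lo_lt jj; move=> h; have := leq_trans h2 (leq_trans h h3); rewrite ltnn.
by have := hi_lo_lt jj; move=> h; have := leq_trans h4 (leq_trans h h1); rewrite ltnn.
Qed.

Lemma block_exists (r : nat) : (r < n)%N -> exists j, in_block ns j r.
Proof.
move=> rn; pose j0 := Ordinal ht.
have hj0 : (lo j0 <= r)%N by rewrite /lo big_pred0.
case: (@arg_maxnP _ j0 (fun j : 'I_t => (lo j <= r)%N) (fun j => nat_of_ord j) hj0).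
move=> j hj hmax; exists j; rewrite in_blockE hj /=.
have [jt|tj] := ltnP j.+1 t.
  rewrite ltnNge; apply/negP => hr.
  have hlo : lo (Ordinal jt) = hi j.
    by rewrite /lo /hi; apply: eq_bigl => l /=; rewrite ltnS.
  have := hmax (Ordinal jt); rewrite /= hlo => /(_ hr); rewrite ltnn.
  by [].
have -> : hi j = n.
  rewrite -hsum /hi; apply: eq_bigl => l; rewrite -ltnS.
  exact: leq_trans (ltn_ord l) tj.
by [].
Qed.

Definition blk (r : nat) : 'I_t := odflt (Ordinal ht) [pick j | in_block ns j r].

Lemma blkP (r : nat) : (r < n)%N -> in_block ns (blk r) r.
Proof.
move=> rn; rewrite /blk; case: pickP => [j //|h].
by have [j hj] := block_exists rn; rewrite h in hj.
Qed.

Lemma blk_eq j (r : nat) : in_block ns j r -> blk r = j.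
Proof.
move=> hj; have rn : (r < n)%N.
  by move: hj; rewrite in_blockE => /andP[_ h]; apply: leq_trans h (hi_le j).
exact: block_uniq (blkP rn) hj.
Qed.

Lemma off_lt (r : nat) : (r < n)%N -> (r - lo (blk r) < ns (blk r))%N.
Proof.
move=> rn; have := blkP rn; rewrite in_blockE hi_lo => /andP[h1 h2].
by rewrite ltn_subLR // addnC.
Qed.

Lemma lo_off_lt j (i : nat) : (i < ns j)%N -> (lo j + i < n)%N.
Proof. by move=> h; apply: leq_trans (hi_le j); rewrite hi_lo ltn_add2l. Qed.

Lemma in_block_off j (i : nat) : (i < ns j)%N -> in_block ns j (lo j + i).
Proof. by move=> h; rewrite in_blockE leq_addr hi_lo ltn_add2l. Qed.

End Blk.

End BlkM.
Import BlkM.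

Module RkM.
Set Implicit Arguments. Unset Strict Implicit. Unset Printing Implicit Defensive.
Section S.
Variable R : realType.
Local Notation C := R[i].
Lemma rank_sum_eps n t (eps : 'I_t -> 'M[C]_n) :
  (forall j, eps j *m eps j = eps j) ->
  (forall j l, j != l -> eps j *m eps l = 0) ->
  \sum_(j < t) eps j = 1%:M ->
  (\sum_(j < t) \rank (eps j))%N = n.
Proof.
move=> hid hor hs.
have hd : mxdirect (\sum_(j < t) eps j)%MS.
  apply/mxdirect_sumsP => i _; apply/eqP/rowV0P => v.
  rewrite sub_capmx => /andP[/submxP [x ->] /sub_sumsmxP [u hu]].
  have : x *m eps i *m eps i = x *m eps i by rewrite -mulmxA hid.
  rewrite {1}hu mulmx_suml big1 => [<- //|j /andP[_ ji]].
  by rewrite -mulmxA (hor j i ji) mulmx0.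
have hr : \rank (\sum_(j < t) eps j)%MS = n.
  apply/eqP; rewrite eqn_leq rank_leq_col /= -{1}(mxrank1 C n) mxrankS //.
  by rewrite -hs; apply: summx_sub_sums => j _; apply: submx_refl.
by move: hd; rewrite mxdirectE /= hr => /eqP.
Qed.
End S.

End RkM.
Import RkM.

Module QPM.
Set Implicit Arguments. Unset Strict Implicit. Unset Printing Implicit Defensive.
Section Q.
Variable R : realType.
Local Notation C := R[i].
Variables (n t : nat) (ht : (0 < t)%N) (ns : 'I_t -> nat).
Hypothesis hsum : (\sum_(j < t) ns j)%N = n.
Variable eps : 'I_t -> 'M[C]_n.
Hypothesis hid : forall j, eps j *m eps j = eps j.
Hypothesis hor : forall j l, j != l -> eps j *m eps l = 0.
Hypothesis hs1 : \sum_(j < t) eps j = 1%:M.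
Variable S : forall j, 'M[C]_(ns j, n).
Hypothesis hS1 : forall j, S j *m eps j = S j.
Hypothesis hS2 : forall j, (eps j <= S j)%MS.

Definition rowN k (M : 'M[C]_(k, n)) (i : nat) : 'rV[C]_n :=
  \sum_(r < k | val r == i) row r M.

Lemma rowN_ord k (M : 'M[C]_(k, n)) (r : 'I_k) : rowN M r = row r M.
Proof.
rewrite /rowN (bigD1 r) //= big1 ?addr0 // => r' /andP[/eqP h1 h2].
by case/eqP: h2; apply: val_inj.
Qed.

Lemma rowN_eps j i : rowN (S j) i *m eps j = rowN (S j) i.
Proof. by rewrite mulmx_suml; apply: eq_bigr => r _; rewrite -row_mul hS1. Qed.

Definition Qmx : 'M[C]_n :=
  \matrix_(r, c) (rowN (S (blk ht ns r)) (r - lo ns (blk ht ns r))) 0 c.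

Local Notation bk r := (blk ht ns r).

Lemma rowQ (r : 'I_n) : row r Qmx = rowN (S (bk r)) (r - lo ns (bk r)).
Proof. by apply/rowP => c; rewrite !mxE. Qed.

Lemma rowQ_eps (r : 'I_n) : row r Qmx *m eps (bk r) = row r Qmx.
Proof. by rewrite rowQ rowN_eps. Qed.

Lemma rowQ_eps0 (r : 'I_n) l : l != bk r -> row r Qmx *m eps l = 0.
Proof. by move=> h; rewrite -rowQ_eps -mulmxA hor ?mulmx0 // eq_sym. Qed.

Lemma S_subQ j : (S j <= Qmx)%MS.
Proof.
apply/row_subP => i.
have hc := lo_off_lt hsum (ltn_ord i).
have hb : bk (Ordinal hc) = j by apply: (blk_eq ht hsum); exact: (in_block_off (ltn_ord i)).
have -> : row i (S j) = row (Ordinal hc) Qmx.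
  rewrite rowQ /= hb addKn; exact/esym/rowN_ord.
exact: row_sub.
Qed.

Lemma Q_unit : Qmx \in unitmx.
Proof.
rewrite -row_full_unit -sub1mx -hs1; apply: summx_sub => j _.
exact: submx_trans (hS2 j) (S_subQ j).
Qed.

Definition Pmx := invmx Qmx.

Lemma rowcol m p q (X : 'M[C]_(m, p)) (Y : 'M[C]_(p, q)) r c :
  (row r X *m col c Y) 0 0 = (X *m Y) r c.
Proof. by rewrite !mxE; apply: eq_bigr => k _; rewrite !mxE. Qed.

Lemma colP_eps0 (c : 'I_n) l : l != bk c -> eps l *m col c Pmx = 0.
Proof.
move=> lc; set u := eps l *m col c Pmx.
have hQu : Qmx *m u = 0.
  apply/row_matrixP => r; rewrite row_mul row0 /u mulmxA.
  have [lr|lr] := eqVneq l (bk r); last by rewrite rowQ_eps0 ?mul0mx.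
  rewrite lr rowQ_eps; apply/rowP => k; rewrite [k]ord1 rowcol /Pmx mulmxV ?Q_unit //.
  rewrite !mxE; case: eqP => [rc|]; last by rewrite mulr0n.
  by subst r; rewrite lr eqxx in lc.
by rewrite -[u]mul1mx -(mulVmx Q_unit) -mulmxA hQu mulmx0.
Qed.

Lemma colP_eps (c : 'I_n) : eps (bk c) *m col c Pmx = col c Pmx.
Proof.
rewrite -{2}[col c Pmx]mul1mx -hs1 mulmx_suml (bigD1 (bk c)) //= big1 ?addr0 //.
by move=> l /colP_eps0.
Qed.


Lemma adj_col p q (M : 'M[C]_(p, q)) c : adjmx (col c M) = row c (adjmx M).
Proof. by rewrite /adjmx map_col tr_col. Qed.

Lemma adj_row p q (M : 'M[C]_(p, q)) r : adjmx (row r M) = col r (adjmx M).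
Proof. by rewrite /adjmx map_row tr_row. Qed.

Lemma P_blockdiag (B : 'M[C]_n) :
  (forall j, adjmx (eps j) *m B = B *m eps j) ->
  block_diag ns (adjmx Pmx *m B *m Pmx).
Proof.
move=> hB r c hnot.
have bne : bk c != bk r.
  apply/eqP => e; case/negP: hnot; apply/existsP; exists (bk c).
  by rewrite {1}e !(blkP ht hsum (ltn_ord _)).
rewrite -rowcol row_mul -adj_col -(colP_eps c) mulmxA -(mulmxA _ B) -hB mulmxA.
by rewrite -adjmxM colP_eps0 // adjmx0 !mul0mx mxE.
Qed.

Lemma rowQ_ord (r : 'I_n) :
  row r Qmx = row (Ordinal (off_lt ht hsum (ltn_ord r))) (S (bk r)).
Proof. by rewrite rowQ -rowN_ord. Qed.

Lemma rowN_prod (hu : forall j, S j *m adjmx (S j) = 1%:M) j a b :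
  (a < ns j)%N -> (b < ns j)%N ->
  (rowN (S j) a *m adjmx (rowN (S j) b)) 0 0 = (a == b)%:R.
Proof.
move=> ha hb; rewrite -[a]/(val (Ordinal ha)) -[b]/(val (Ordinal hb)) !rowN_ord.
by rewrite adj_row rowcol hu mxE.
Qed.

Lemma Q_unitary : (forall j, herm_mx (eps j)) ->
  (forall j, S j *m adjmx (S j) = 1%:M) -> Qmx *m adjmx Qmx = 1%:M.
Proof.
move=> hh hu; apply/matrixP => r c.
rewrite -rowcol -adj_row.
have [e|ne] := eqVneq (bk r) (bk c).
  have hr := off_lt ht hsum (ltn_ord r); have hc := off_lt ht hsum (ltn_ord c).
  have lr : (lo ns (bk r) <= r)%N by case/andP: (blkP ht hsum (ltn_ord r)).
  have lc : (lo ns (bk c) <= c)%N by case/andP: (blkP ht hsum (ltn_ord c)).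
  rewrite !rowQ e; rewrite e in hr lr.
  rewrite rowN_prod // mxE eqn_sub2rE //.
rewrite -(rowQ_eps c) adjmxM (hh (bk c)) mulmxA rowQ_eps0 ?mul0mx ?mxE //.
have -> : (r == c) = false by apply/negP => /eqP rc; subst c; rewrite eqxx in ne.
  by []. by rewrite eq_sym.
Qed.
End Q.

End QPM.
Import QPM.

Module DPM.
Set Implicit Arguments. Unset Strict Implicit. Unset Printing Implicit Defensive.
Section D.
Variable R : realType.
Local Notation C := R[i].
Variables (n t : nat) (ht : (0 < t)%N) (ns : 'I_t -> nat).
Hypothesis hsum : (\sum_(j < t) ns j)%N = n.
Hypothesis hpos : forall j, (0 < ns j)%N.

Definition Dm (j : 'I_t) : 'M[C]_n := diag_mx (\row_(r < n) (in_block ns j r)%:R).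

Lemma DmE j (r c : 'I_n) : Dm j r c = ((r == c) && in_block ns j r)%:R.
Proof. by rewrite !mxE; case: eqP; case: in_block. Qed.

Lemma DmM j l : Dm j *m Dm l = if j == l then Dm j else 0.
Proof.
rewrite mulmx_diag; apply/matrixP => r c; rewrite !mxE.
have [<-|jl] := eqVneq j l.
  by rewrite !mxE; case: in_block; case: eqP; rewrite ?mulr1 ?mulr0.
rewrite mxE.
case h1: (in_block ns j r); case h2: (in_block ns l r); rewrite ?mulr0 ?mul0r ?mul0rn //.
by case/eqP: jl; apply: block_uniq h1 h2.
Qed.

Lemma Dm_sum : \sum_(j < t) Dm j = 1%:M.
Proof.
apply/matrixP => r c; rewrite summxE !mxE.
rewrite (bigD1 (blk ht ns r)) //= big1.
  by rewrite !mxE (blkP ht hsum (ltn_ord r)) addr0 eq_sym.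
move=> j hj; rewrite !mxE.
case h: (in_block ns j r); last by rewrite mul0rn.
by case/eqP: hj; rewrite (blk_eq ht hsum h).
Qed.

Lemma Dm_adj j : adjmx (Dm j) = Dm j.
Proof.
apply/matrixP => r c; rewrite !mxE.
have [->|rc] := eqVneq r c; rewrite ?eqxx ?mulr1n; last by rewrite !mulr0n conjC0.
by case: in_block; rewrite ?conjC0 ?conjC1.
Qed.

Lemma Dm_neq0 j : Dm j != 0.
Proof.
have hr := lo_off_lt hsum (hpos j); rewrite addn0 in hr.
apply/eqP => /matrixP /(_ (Ordinal hr) (Ordinal hr)); rewrite DmE !mxE eqxx /=.
have := in_block_off (hpos j); rewrite addn0 => -> /eqP.
by rewrite oner_eq0.
Qed.

Lemma bd_comm (B : 'M[C]_n) j : block_diag ns B -> B *m Dm j = Dm j *m B.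
Proof.
move=> hB; rewrite mul_mx_diag mul_diag_mx; apply/matrixP => r c; rewrite !mxE.
have [/existsP [j' /andP[h1 h2]] | hn] := boolP [exists j, in_block ns j r && in_block ns j c].
  have -> : in_block ns j c = in_block ns j r.
    by apply/idP/idP => h; [rewrite (block_uniq h h2) | rewrite (block_uniq h h1)].
  by rewrite mulrC.
by rewrite hB // mul0r mulr0.
Qed.

Variable m : nat.
Variable A : 'I_m -> 'M[C]_n.
Hypothesis hA : forall k, herm_mx (A k).
Variable P : 'M[C]_n.
Hypothesis hP : P \in unitmx.
Hypothesis hbd : forall k, block_diag ns (adjmx P *m A k *m P).

Lemma adj_sandwich (X B D : 'M[C]_n) : adjmx B = B -> B *m D = D *m B ->
  adjmx D = D -> adjmx (adjmx X *m (B *m D) *m X) = adjmx X *m (B *m D) *m X.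
Proof. by move=> hB hBD hD; rewrite !adjmxM adjmxK hB hD -hBD !mulmxA. Qed.

Definition epsP j := P *m Dm j *m invmx P.

Lemma epsP_orth : orth_idem_set A epsP.
Proof.
have hM : forall j l, epsP j *m epsP l = P *m (Dm j *m Dm l) *m invmx P.
  by move=> j l; rewrite /epsP !mulmxA mulmxKV.
split.
- move=> j; apply/negP => /eqP h; case/negP: (Dm_neq0 j); apply/eqP.
  have := congr1 (fun M => invmx P *m M *m P) h.
  by rewrite /epsP mulmx0 mul0mx !mulmxA mulVmx // mul1mx mulmxKV.
- move=> j k.
  have hXP : adjmx (invmx P) *m adjmx P = 1%:M by rewrite -adjmxM mulmxV // adjmx1.
  have E1 : A k *m epsP j =
      adjmx (invmx P) *m ((adjmx P *m A k *m P) *m Dm j) *m invmx P.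
    by rewrite /epsP !mulmxA hXP mul1mx.
  have hB : adjmx (adjmx P *m A k *m P) = adjmx P *m A k *m P.
    by rewrite !adjmxM adjmxK (hA k) mulmxA.
  rewrite E1; apply: adj_sandwich => //; last exact: Dm_adj.
  by apply: bd_comm; apply: hbd.
- by move=> j; rewrite hM DmM eqxx.
- by move=> j l jl; rewrite hM DmM (negPf jl) mulmx0 mul0mx.
- by rewrite /epsP -mulmx_suml -mulmx_sumr Dm_sum mulmx1 mulmxV.
Qed.

Lemma epsP_herm : adjmx P *m P = 1%:M -> forall j, herm_mx (epsP j).
Proof.
move=> hu j; have hX : invmx P = adjmx P.
  by rewrite -[invmx P]mulmx1 -(mulmx1C hu) mulmxA mulVmx // mul1mx.
by rewrite /herm_mx /epsP hX !adjmxM adjmxK Dm_adj mulmxA.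
Qed.
End D.

End DPM.
Import DPM.


Lemma Vof_orth (R : realType) n t (eps : 'I_t -> 'M[R[i]]_n) :
  (forall j l, j != l -> eps j *m eps l = 0) -> (forall j, herm_mx (eps j)) ->
  orth_family (Vof eps).
Proof.
move=> hor hh j l x y jl /memVof [u ->] /memVof [w ->].
by rewrite adjmxM (hh j) -mulmxA (mulmxA (eps j)) hor // mul0mx mulmx0.
Qed.

Lemma sub_idem (R : realType) n p (S : 'M[R[i]]_(p, n)) (E : 'M[R[i]]_n) :
  (S <= E)%MS -> E *m E = E -> S *m E = S.
Proof. by case/submxP => X -> hE; rewrite -mulmxA hE. Qed.

Theorem mainTheorem7 (R : realType) (m n t : nat) (A : 'I_m -> 'M[R[i]]_n)
  (hA : forall k, herm_mx (A k)) (ht : (0 < t)%N) :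
  (* (a) *)
  [/\ (forall V : 'I_t -> {vspace 'cV[R[i]]_n}, block_decomp A V -> exists! eps : 'I_t -> 'M[R[i]]_n, proj_family V eps),
      (forall (V : 'I_t -> {vspace 'cV[R[i]]_n}) (eps : 'I_t -> 'M[R[i]]_n), block_decomp A V -> proj_family V eps -> orth_idem_set A eps),
      (forall (V V' : 'I_t -> {vspace 'cV[R[i]]_n}) (eps : 'I_t -> 'M[R[i]]_n), block_decomp A V -> block_decomp A V' ->
         proj_family V eps -> proj_family V' eps -> V = V'),
      (forall eps : 'I_t -> 'M[R[i]]_n, orth_idem_set A eps ->
         exists V : 'I_t -> {vspace 'cV[R[i]]_n}, block_decomp A V /\ proj_family V eps) &
      ((exists (P : 'M[R[i]]_n) (ns : 'I_t -> nat),
          [/\ P \in unitmx, (forall j, 0 < ns j)%N, (\sum_(j < t) ns j)%N = n &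
              forall k, block_diag ns (adjmx P *m A k *m P)])
       <-> exists eps : 'I_t -> 'M[R[i]]_n, orth_idem_set A eps)]
  /\
  (* (b) *)
  [/\ (forall (V : 'I_t -> {vspace 'cV[R[i]]_n}) (eps : 'I_t -> 'M[R[i]]_n), block_decomp A V -> orth_family V -> proj_family V eps ->
         orth_idem_set A eps /\ forall j, herm_mx (eps j)),
      (forall (V V' : 'I_t -> {vspace 'cV[R[i]]_n}) (eps : 'I_t -> 'M[R[i]]_n), block_decomp A V -> orth_family V ->
         block_decomp A V' -> orth_family V' ->
         proj_family V eps -> proj_family V' eps -> V = V'),
      (forall eps : 'I_t -> 'M[R[i]]_n, orth_idem_set A eps -> (forall j, herm_mx (eps j)) ->
         exists V : 'I_t -> {vspace 'cV[R[i]]_n}, [/\ block_decomp A V, orth_family V & proj_family V eps]) &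
      ((exists (U : 'M[R[i]]_n) (ns : 'I_t -> nat),
          [/\ unitary_mx U, (forall j, 0 < ns j)%N, (\sum_(j < t) ns j)%N = n &
              forall k, block_diag ns (adjmx U *m A k *m U)])
       <-> exists eps : 'I_t -> 'M[R[i]]_n, orth_idem_set A eps /\ forall j, herm_mx (eps j))].
Proof.
have hadj : forall eps : 'I_t -> 'M[R[i]]_n, orth_idem_set A eps ->
    forall (k : 'I_m) (j : 'I_t), adjmx (eps j) *m A k = A k *m eps j.
  move=> eps he k j; case: he => _ hc _ _ _; have := hc j k; by rewrite adjmxM (hA k).
split; split.
- move=> V hV; case: hV => hnz hd hs _; have [eps hp] := proj_exists hd hs.
  by exists eps; split => // eps' hp'; apply: (proj_unique hs).
- exact: part_a2.
- by move=> V V' eps [_ _ hs _] [_ _ hs' _]; apply: V_unique.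
- by move=> eps he; exists (Vof eps); apply: Vof_decomp.
- split.
    case=> P [ns [hP hpos hsum hbd]]; exists (epsP ns P).
    exact: (epsP_orth ht hsum hpos hA hP hbd).
  case=> eps he; have [hnz hc hid hor hs1] := he.
  pose ns j := \rank (eps j).
  have hsum : (\sum_(j < t) ns j)%N = n by apply: rank_sum_eps.
  pose S j : 'M_(ns j, n) := row_base (eps j).
  have hS2 : forall j, (eps j <= S j)%MS by move=> j; rewrite /S eq_row_base.
  have hS1 : forall j, S j *m eps j = S j.
    by move=> j; apply: sub_idem => //; rewrite /S eq_row_base.
  exists (Pmx ht S), ns; split.
  + by rewrite unitmx_inv (Q_unit ht hsum hs1 hS2).
  + by move=> j; rewrite lt0n mxrank_eq0 hnz.
  + exact: hsum.
  + move=> k; apply: (P_blockdiag ht hsum hor hs1 hS1 hS2) => j.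
    exact: hadj.
- move=> V eps hV ho hp; split; first exact: part_a2 hV hp.
  by case: hV => _ _ hs _; apply: herm_proj ho hp.
- by move=> V V' eps [_ _ hs _] _ [_ _ hs' _] _; apply: V_unique.
- move=> eps he hh; exists (Vof eps); have [h1 h2] := Vof_decomp hA he.
  by split => //; case: he => _ _ _ hor _; apply: Vof_orth.
- split.
    case=> U [ns [hU hpos hsum hbd]].
    have hUu : U \in unitmx by case: (mulmx1_unit hU).
    exists (epsP ns U); split; first exact: (epsP_orth ht hsum hpos hA hUu hbd).
    exact: epsP_herm.
  case=> eps [he hh]; have [hnz hc hid hor hs1] := he.
  pose ns j := \rank (eps j).
  have hsum : (\sum_(j < t) ns j)%N = n by apply: rank_sum_eps.
  pose S j : 'M_(ns j, n) := schmidt (row_base (eps j)).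
  have hSE : forall j, (S j :=: eps j)%MS.
    move=> j; apply: eqmx_trans (eq_row_base (eps j)).
    exact: eqmx_schmidt_free (row_base_free _).
  have hS2 : forall j, (eps j <= S j)%MS by move=> j; rewrite hSE.
  have hS1 : forall j, S j *m eps j = S j.
    by move=> j; apply: sub_idem => //; rewrite hSE.
  have hSu : forall j, S j *m adjmx (S j) = 1%:M.
    move=> j; rewrite adjmxE; apply/unitarymxP.
    exact: schmidt_unitarymx (rank_leq_col _).
  have hQ := Q_unitary ht hsum hor hS1 hh hSu.
  have hP : Pmx ht S = adjmx (Qmx ht S).
    rewrite /Pmx -[invmx _]mulmx1 -hQ mulmxA mulVmx ?mul1mx //.
    exact: (Q_unit ht hsum hs1 hS2).
  exists (Pmx ht S), ns; split.
  + by rewrite /unitary_mx hP adjmxK.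
  + by move=> j; rewrite lt0n mxrank_eq0 hnz.
  + exact: hsum.
  + move=> k; apply: (P_blockdiag ht hsum hor hs1 hS1 hS2) => j.
    exact: hadj.
Qed.
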